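(* Let $\alpha>1$ be fixed, and let $K$ and $J$ be bounded fundamental domains for the lattices $\alpha\mathbb{Z}$ and $\frac1\alpha\mathbb{Z}$ in $\mathbb{R}$, respectively. Then $B_\alpha:=\{\mathcal{Z}_{r,s,\alpha}: r\in J,\ s\in K\}$ is an algebraic basis (Hamel basis) of the complex vector space $V_\alpha:=\mathrm{span}_{\mathbb{C}}\{\mathcal{Z}_{r,s,\alpha}: r,s\in\mathbb{R}\}$ of all finite linear combinations of such measures.
   Context: For $r,s\in\mathbb{R}$ and $\alpha>0$, $\mathcal{Z}_{r,s,\alpha}:=\chi_r\cdot(\delta_s*\delta_{\alpha\mathbb{Z}})=\sum_{m\in\mathbb{Z}}e^{2\pi i r(s+m\alpha)}\delta_{s+m\alpha}$, where $\chi_r(x)=e^{2\pi i rx}$ and $\delta_x$ is the unit point mass at $x$. A fundamental domain for a lattice $L\subset\mathbb{R}$ is a set containing exactly one point of each coset $x+L$. *)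

(* Defs.v *)
From Stdlib Require Import Reals List ZArith ClassicalEpsilon.
From Coquelicot Require Import Coquelicot.
Open Scope R_scope.

Definition chi (r x : R) : C := (cos (2 * PI * r * x), sin (2 * PI * r * x)).

Definition in_coset (alpha s x : R) : Prop := exists m : Z, x = s + IZR m * alpha.

(* The purely atomic measure Z_{r,s,alpha} = sum_m e^{2 pi i r (s + m alpha)} delta_{s+m alpha},
   represented by its atom-weight function x |-> Z_{r,s,alpha}({x}). *)
Definition Zm (r s alpha : R) : R -> C :=
  fun x => if excluded_middle_informative (in_coset alpha s x) then chi r x else (0 : C).

Definition lincomb (l : list (C * (R -> C))) : R -> C :=
  fun x => fold_right (fun p acc => Cplus (Cmult (fst p) (snd p x)) acc) (0 : C) l.

Definition fundamental_domain (step : R) (K : R -> Prop) : Prop :=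
  forall x : R, exists k : R, (K k /\ in_coset step k x) /\
    forall k' : R, K k' /\ in_coset step k' x -> k' = k.

Definition bounded_set (K : R -> Prop) : Prop := exists M : R, forall k, K k -> Rabs k <= M.

Definition V_alpha (alpha : R) (f : R -> C) : Prop :=
  exists l : list (C * (R -> C)),
    List.Forall (fun p : C * (R -> C) => exists r s : R, snd p = Zm r s alpha) l /\ f = lincomb l.

Definition B_alpha (alpha : R) (J K : R -> Prop) (f : R -> C) : Prop :=
  exists r s : R, J r /\ K s /\ f = Zm r s alpha.

Definition hamel_basis (V B : (R -> C) -> Prop) : Prop :=
  (forall b, B b -> V b) /\
  (forall l : list (C * (R -> C)),
      List.Forall (fun p : C * (R -> C) => B (snd p)) l -> NoDup (map snd l) ->
      lincomb l = (fun _ => (0 : C)) -> List.Forall (fun p : C * (R -> C) => fst p = (0 : C)) l) /\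
  (forall f, V f -> exists l : list (C * (R -> C)),
      List.Forall (fun p : C * (R -> C) => B (snd p)) l /\ f = lincomb l).

(* Main.v *)
Require Import Defs.
From Stdlib Require Import Reals Lra List ZArith ClassicalEpsilon FunctionalExtensionality.
From Coquelicot Require Import Coquelicot.
Open Scope R_scope.

Lemma chi_add_x r x y : chi r (x+y) = Cmult (chi r x) (chi r y).
Proof.
  unfold chi, Cmult; simpl.
  replace (2*PI*r*(x+y)) with (2*PI*r*x + 2*PI*r*y) by ring.
  rewrite cos_plus, sin_plus. f_equal; ring.
Qed.

Lemma chi_add_r r r' x : chi (r+r') x = Cmult (chi r x) (chi r' x).
Proof.
  unfold chi, Cmult; simpl.
  replace (2*PI*(r+r')*x) with (2*PI*r*x + 2*PI*r'*x) by ring.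
  rewrite cos_plus, sin_plus. f_equal; ring.
Qed.

Lemma chi_int r x (n:Z) : r * x = IZR n -> chi r x = RtoC 1.
Proof.
  intro H. unfold chi.
  replace (2*PI*r*x) with (2*(IZR n * PI)) by (rewrite <- H; ring).
  rewrite cos_2a_sin, sin_2a, sin_eq_0_1 by (exists n; ring).
  unfold RtoC. f_equal; ring.
Qed.

Lemma chi_nz r x : chi r x <> (0:C).
Proof.
  unfold chi. intro H. injection H as H1 H2.
  apply (cos_sin_0 (2*PI*r*x)); auto.
Qed.

Lemma cos1 x : cos x = 1 -> exists k:Z, x = 2 * IZR k * PI.
Proof.
  intro H.
  assert (Hs : sin (x/2) = 0).
  { replace x with (2*(x/2)) in H by field.
    rewrite cos_2a_sin in H.
    assert (sin (x/2) * sin (x/2) = 0) by lra.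
    destruct (Rmult_integral _ _ H0); auto. }
  destruct (sin_eq_0_0 _ Hs) as [k Hk]. exists k. lra.
Qed.

Lemma chi_one t a : chi t a = RtoC 1 -> exists k:Z, t * a = IZR k.
Proof.
  intro H. unfold chi, RtoC in H. injection H as H1 H2.
  destruct (cos1 _ H1) as [k Hk]. exists k.
  apply Rmult_eq_reg_l with (2*PI).
  - replace (2*PI*(t*a)) with (2*PI*t*a) by ring. rewrite Hk. ring.
  - pose proof PI_RGT_0. lra.
Qed.

Lemma coset_refl a s : in_coset a s s.
Proof. exists 0%Z. simpl. ring. Qed.

Lemma coset_shift a s x : in_coset a s x -> in_coset a s (x + a).
Proof.
  intros [m Hm]. exists (m+1)%Z. rewrite plus_IZR, Hm. simpl. ring.
Qed.

Lemma coset_meet a s s' x : in_coset a s x -> in_coset a s' x -> in_coset a s s'.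
Proof.
  intros [m Hm] [m' Hm']. exists (m - m')%Z. rewrite minus_IZR. lra.
Qed.

Lemma coset_sym a s x : in_coset a s x -> in_coset a x s.
Proof.
  intros [m Hm]. exists (- m)%Z. rewrite opp_IZR. lra.
Qed.

Lemma fd_uniq a K s s' : fundamental_domain a K -> K s -> K s' -> in_coset a s s' -> s = s'.
Proof.
  intros HK Ks Ks' Hc. destruct (HK s') as [k [[Kk Hk] U]].
  rewrite (U s' (conj Ks' (coset_refl a s'))), (U s (conj Ks Hc)). reflexivity.
Qed.

Lemma Cmult_integral_r (c mu : C) : mu <> (0:C) -> Cmult c mu = (0:C) -> c = (0:C).
Proof.
  intros H H1. replace c with (Cdiv (Cmult c mu) mu) by (field; auto).
  rewrite H1. field; auto.
Qed.

Definition E (a s : R) (lam : C) (f : R -> C) : R -> C :=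
  fun x => if excluded_middle_informative (in_coset a s x)
           then Cminus (f (x + a)) (Cmult lam (f x)) else f x.

Lemma E_lin a s lam c f g :
  E a s lam (fun x => Cplus (Cmult c (f x)) (g x)) =
  fun x => Cplus (Cmult c (E a s lam f x)) (E a s lam g x).
Proof.
  apply functional_extensionality; intro x. unfold E.
  destruct (excluded_middle_informative _); ring.
Qed.

Lemma E_zero a s lam : E a s lam (fun _ => (0:C)) = fun _ => (0:C).
Proof.
  apply functional_extensionality; intro x. unfold E.
  destruct (excluded_middle_informative _); ring.
Qed.

Lemma E_same a s r r' :
  E a s (chi r a) (Zm r' s a) = fun x => Cmult (Cminus (chi r' a) (chi r a)) (Zm r' s a x).
Proof.
  apply functional_extensionality; intro x. unfold E, Zm.
  destruct (excluded_middle_informative (in_coset a s x)) as [h|h];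
  destruct (excluded_middle_informative (in_coset a s (x + a))) as [h'|h'].
  - rewrite chi_add_x. ring.
  - exfalso. apply h'. apply coset_shift; auto.
  - ring.
  - ring.
Qed.

Lemma E_disj a s s' r r' : ~ in_coset a s s' ->
  E a s (chi r a) (Zm r' s' a) = Zm r' s' a.
Proof.
  intro Hn. apply functional_extensionality; intro x. unfold E, Zm.
  destruct (excluded_middle_informative (in_coset a s x)) as [h|h]; [|reflexivity].
  destruct (excluded_middle_informative (in_coset a s' x)) as [h1|h1].
  { exfalso. apply Hn. exact (coset_meet _ _ _ _ h h1). }
  destruct (excluded_middle_informative (in_coset a s' (x + a))) as [h2|h2].
  { exfalso. apply Hn. exact (coset_meet _ _ _ _ (coset_shift _ _ _ h) h2). }
  ring.
Qed.

Lemma lincomb_cons p l : lincomb (p :: l) = fun x => Cplus (Cmult (fst p) (snd p x)) (lincomb l x).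
Proof. reflexivity. Qed.

Lemma map_eig (Eo : (R -> C) -> R -> C)
  (Elin : forall c f g, Eo (fun x => Cplus (Cmult c (f x)) (g x)) = fun x => Cplus (Cmult c (Eo f x)) (Eo g x))
  (E0 : Eo (fun _ => (0:C)) = fun _ => (0:C)) (l : list (C * (R -> C))) :
  List.Forall (fun p : C * (R -> C) => exists mu, mu <> (0:C) /\ Eo (snd p) = fun x => Cmult mu (snd p x)) l ->
  exists l'', map snd l'' = map snd l /\
    List.Forall2 (fun p q => fst q = (0:C) -> fst p = (0:C)) l l'' /\ lincomb l'' = Eo (lincomb l).
Proof.
  induction l as [|[c b] l IH]; intro HF.
  - exists nil. split; [reflexivity|split; [constructor|]]. simpl. symmetry. exact E0.
  - inversion HF as [|? ? [mu [Hmu Heq]] HF']; subst.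
    destruct (IH HF') as [l'' [H1 [H2 H3]]].
    exists ((Cmult c mu, b) :: l''). split; [simpl; rewrite H1; reflexivity|split].
    + constructor; auto. simpl. intro H. exact (Cmult_integral_r _ _ Hmu H).
    + rewrite !lincomb_cons. simpl. rewrite Elin. simpl in Heq. rewrite Heq, H3.
      apply functional_extensionality; intro x. ring.
Qed.

Lemma Forall2_zero (l l'' : list (C * (R -> C))) :
  List.Forall2 (fun p q => fst q = (0:C) -> fst p = (0:C)) l l'' ->
  List.Forall (fun p => fst p = (0:C)) l'' -> List.Forall (fun p => fst p = (0:C)) l.
Proof.
  induction 1; intro H'; constructor; inversion H'; auto.
Qed.

Lemma lincomb_zero l : List.Forall (fun p : C * (R -> C) => fst p = (0:C)) l -> lincomb l = fun _ => (0:C).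
Proof.
  induction 1. reflexivity.
  rewrite lincomb_cons, IHForall, H. apply functional_extensionality; intro; ring.
Qed.

Lemma indep alpha J K :
  fundamental_domain alpha K -> fundamental_domain (/ alpha) J -> alpha <> 0 ->
  forall l : list (C * (R -> C)),
      List.Forall (fun p : C * (R -> C) => B_alpha alpha J K (snd p)) l -> NoDup (map snd l) ->
      lincomb l = (fun _ => (0 : C)) -> List.Forall (fun p : C * (R -> C) => fst p = (0 : C)) l.
Proof.
  intros HK HJ Ha l.
  remember (length l) as n eqn:Hlen. revert l Hlen.
  induction n as [|n IHn]; intros [|[c b] l] Hlen HB HN H0; try apply List.Forall_nil;
    try discriminate.
  simpl in Hlen. injection Hlen as Hlen.
  inversion HB as [|? ? Bb HB']; subst. inversion HN as [|? ? Hnin HN']; subst.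
  destruct Bb as (r & s & Jr & Ks & Hb). simpl in Hb. subst b.
  set (Eo := E alpha s (chi r alpha)).
  assert (Heig : List.Forall (fun p : C * (R -> C) => exists mu, mu <> (0:C) /\ Eo (snd p) = fun x => Cmult mu (snd p x)) l).
  { apply List.Forall_forall. intros [ci bi] Hin. simpl.
    rewrite List.Forall_forall in HB'. destruct (HB' _ Hin) as (ri & si & Jri & Ksi & Hbi).
    simpl in Hbi. subst bi.
    assert (Hne : Zm ri si alpha <> Zm r s alpha).
    { intro He. apply Hnin. rewrite <- He. apply (in_map snd _ (ci, _) Hin). }
    destruct (classic (in_coset alpha s si)) as [Hc|Hc].
    - pose proof (fd_uniq _ _ _ _ HK Ks Ksi Hc) as Hs. subst si.
      exists (Cminus (chi ri alpha) (chi r alpha)). split.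
      + intro Hz. apply Hne. f_equal.
        assert (Hone : chi (ri + - r) alpha = RtoC 1).
        { rewrite chi_add_r.
          assert (chi ri alpha = chi r alpha).
          { replace (chi ri alpha) with (Cplus (Cminus (chi ri alpha) (chi r alpha)) (chi r alpha)) by ring.
            rewrite Hz. ring. }
          rewrite H. rewrite <- chi_add_r. apply chi_int with 0%Z. simpl. ring. }
        destruct (chi_one _ _ Hone) as [k Hk].
        apply (fd_uniq _ _ _ _ HJ Jri Jr). exists (- k)%Z. rewrite opp_IZR.
        rewrite <- Hk. field. auto.
      + apply E_same.
    - exists (RtoC 1). split.
      + intro H. injection H. lra.
      + unfold Eo. rewrite (E_disj _ _ _ _ _ Hc). apply functional_extensionality; intro; ring. }
  destruct (map_eig Eo (E_lin alpha s (chi r alpha)) (E_zero alpha s (chi r alpha)) l Heig)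
    as [l'' [H1 [H2 H3]]].
  assert (Hl0 : List.Forall (fun p => fst p = (0:C)) l).
  { apply (Forall2_zero l l'' H2). apply IHn.
    - rewrite <- (length_map snd l), <- H1, length_map. reflexivity.
    - apply List.Forall_map. rewrite H1. apply List.Forall_map. exact HB'.
    - rewrite H1. exact HN'.
    - rewrite H3. apply functional_extensionality; intro x.
      pose proof (f_equal (fun f => Eo f x) H0) as Hx. simpl in Hx.
      rewrite lincomb_cons in Hx. unfold Eo in Hx. rewrite E_lin, E_zero in Hx.
      simpl in Hx. rewrite E_same in Hx. unfold Eo.
      replace (E alpha s (chi r alpha) (lincomb l) x) with
        (Cplus (Cmult c (Cmult (Cminus (chi r alpha) (chi r alpha)) (Zm r s alpha x)))
               (E alpha s (chi r alpha) (lincomb l) x)) by ring.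
      exact Hx. }
  apply List.Forall_cons; [|exact Hl0].
  simpl. pose proof (f_equal (fun f => f s) H0) as Hs. cbv beta in Hs.
  rewrite lincomb_cons, lincomb_zero in Hs by exact Hl0. simpl in Hs.
  unfold Zm in Hs. destruct (excluded_middle_informative (in_coset alpha s s)) as [h|h].
  - apply (Cmult_integral_r c (chi r s) (chi_nz r s)).
    replace (Cmult c (chi r s)) with (Cplus (Cmult c (chi r s)) (RtoC 0)) by ring. exact Hs.
  - exfalso. apply h. apply coset_refl.
Qed.

Lemma reduce alpha J K r s :
  fundamental_domain alpha K -> fundamental_domain (/ alpha) J -> alpha <> 0 ->
  exists r' s' c, J r' /\ K s' /\ Zm r s alpha = fun x => Cmult c (Zm r' s' alpha x).
Proof.
  intros HK HJ Ha.
  destruct (HK s) as [s' [[Ks' [m Hm]] _]].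
  destruct (HJ r) as [r' [[Jr' [n Hn]] _]].
  exists r', s', (chi (IZR n * / alpha) s'). split; [auto|split; [auto|]].
  apply functional_extensionality; intro x. unfold Zm.
  destruct (excluded_middle_informative (in_coset alpha s x)) as [h|h];
  destruct (excluded_middle_informative (in_coset alpha s' x)) as [h'|h'].
  - destruct h' as [j Hj]. subst r x. rewrite chi_add_r.
    rewrite (chi_add_x (IZR n * / alpha)). rewrite (chi_int (IZR n * / alpha) (IZR j * alpha) (n * j)%Z).
    + ring.
    + rewrite mult_IZR. field. auto.
  - exfalso. apply h'. destruct h as [j Hj]. exists (m + j)%Z. rewrite plus_IZR. lra.
  - exfalso. apply h. destruct h' as [j Hj]. exists (j - m)%Z. rewrite minus_IZR. lra.
  - ring.
Qed.

Theorem proposition3p6 (alpha : R) (J K : R -> Prop) :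
  1 < alpha ->
  fundamental_domain alpha K -> bounded_set K ->
  fundamental_domain (/ alpha) J -> bounded_set J ->
  hamel_basis (V_alpha alpha) (B_alpha alpha J K).
Proof.
  intros Ha HK _ HJ _.
  assert (Ha0 : alpha <> 0) by lra.
  split; [|split].
  - intros b (r & s & Jr & Ks & Hb). exists ((RtoC 1, b) :: nil). split.
    + constructor; [|constructor]. simpl. exists r, s. exact Hb.
    + apply functional_extensionality; intro x. unfold lincomb. simpl. ring.
  - apply indep; auto.
  - intros f [l [Hl Hf]]. subst f. induction l as [|[c g] l IH].
    + exists nil. split; [constructor|reflexivity].
    + inversion Hl as [|? ? [r [s Hg]] Hl']; subst. simpl in Hg. subst g.
      destruct (IH Hl') as [l2 [H2 H3]].
      destruct (reduce alpha J K r s HK HJ Ha0) as (r' & s' & c' & Jr' & Ks' & Heq).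
      exists ((Cmult c c', Zm r' s' alpha) :: l2). split.
      * constructor; auto. simpl. exists r', s'. auto.
      * rewrite !lincomb_cons, <- H3, Heq. simpl.
        apply functional_extensionality; intro; ring.
Qed.
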